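(* Let $X=(|X|,X^0,\mathbb{P}^{\mathrm{top}}X)$ be a multipointed $d$-space. Let $d(X)$ be the set of continuous paths $[0,1]\to|X|$ consisting of all constant paths together with all Moore compositions of the form \[(\gamma_1\phi_1\mu_{\ell_1})*\dots*(\gamma_n\phi_n\mu_{\ell_n})\] with $n\ge 1$, $\ell_1,\dots,\ell_n>0$, $\ell_1+\dots+\ell_n=1$, where $\gamma_1,\dots,\gamma_n$ are execution paths of $X$ and $\phi_i\in\mathcal{I}(1)$ for $i=1,\dots,n$. Then the pair $\vec{\mathrm{Sp}}(X):=(|X|,d(X))$ is a directed space, and the mapping $X\mapsto\vec{\mathrm{Sp}}(X)$, sending a map of multipointed $d$-spaces to the same underlying continuous map, is a well-defined functor $\vec{\mathrm{Sp}}$ from the category of multipointed $d$-spaces to the category of directed spaces.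
   Context: Let $\mathbf{Top}$ be the category of $\Delta$-generated spaces (or of $\Delta$-Hausdorff $\Delta$-generated spaces). For $\ell>0$ let $\mu_\ell:[0,\ell]\to[0,1]$, $\mu_\ell(t)=t/\ell$. For $\ell,\ell'\ge0$, $\mathcal{M}(\ell,\ell')$ is the set of non-decreasing surjective continuous maps $[0,\ell]\to[0,\ell']$, and $\mathcal{I}(\ell)$ is the set of non-decreasing continuous maps $[0,1]\to[0,\ell]$ (constant maps allowed). A Moore path of length $\ell\ge0$ in a space $U$ is a continuous map $[0,\ell]\to U$; the Moore composition of $\gamma_1:[0,\ell_1]\to U$ and $\gamma_2:[0,\ell_2]\to U$ with $\gamma_1(\ell_1)=\gamma_2(0)$ is the path $\gamma_1*\gamma_2:[0,\ell_1+\ell_2]\to U$ equal to $\gamma_1(t)$ for $t\in[0,\ell_1]$ and $\gamma_2(t-\ell_1)$ for $t\in[\ell_1,\ell_1+\ell_2]$ (it is associative). For $\gamma_1,\gamma_2:[0,1]\to U$ with $\gamma_1(1)=\gamma_2(0)$ the normalized composition is $\gamma_1*_N\gamma_2=(\gamma_1\mu_{1/2})*(\gamma_2\mu_{1/2})$. A multipointed $d$-space is a triple $X=(|X|,X^0,\mathbb{P}^{\mathrm{top}}X)$ where $|X|$ is a space, $X^0\subset|X|$ is a set (the states), and $\mathbb{P}^{\mathrm{top}}X$ is a set of continuous maps $[0,1]\to|X|$ (execution paths) such that: $\gamma(0),\gamma(1)\in X^0$ for every execution path $\gamma$; $\gamma\phi$ is an execution path for every execution path $\gamma$ and every $\phi\in\mathcal{M}(1,1)$;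 $\gamma_1*_N\gamma_2$ is an execution path for composable execution paths $\gamma_1,\gamma_2$. A map $f:X\to Y$ of multipointed $d$-spaces is a continuous map $f:|X|\to|Y|$ with $f(X^0)\subset Y^0$ and $f\gamma\in\mathbb{P}^{\mathrm{top}}Y$ for all $\gamma\in\mathbb{P}^{\mathrm{top}}X$. A directed space is a pair $Y=(|Y|,d(Y))$ where $|Y|$ is a space and $d(Y)$ is a set of continuous maps $[0,1]\to|Y|$ (directed paths) which contains all constant paths, is closed under normalized composition, and satisfies $\gamma\phi\in d(Y)$ for all $\gamma\in d(Y)$, $\phi\in\mathcal{I}(1)$. A morphism of directed spaces is a continuous map of underlying spaces sending directed paths to directed paths. *)

(* Defs.v *)
From HB Require Import structures.
From mathcomp Require Import all_boot all_order all_algebra.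
From mathcomp Require Import all_classical all_reals all_analysis.
Set Implicit Arguments. Unset Strict Implicit. Unset Printing Implicit Defensive.
Import Order.TTheory GRing.Theory Num.Theory.
Import numFieldNormedType.Exports.
Local Open Scope classical_set_scope.
Local Open Scope ring_scope.

Section Defs.
Variable R : realType.

(** Conventions: a (Moore) path of length l in a space T is represented by a
    total function R -> T of which only the values on [0, l] matter.  A "set of
    continuous maps [0,1] -> T" is represented by a set of functions R -> T
    which is saturated (closed under changing values outside [0,1]). *)

Definition saturated (T : Type) (P : set (R -> T)) : Prop :=
  forall g h, P g -> (forall t : R, 0 <= t <= 1 -> h t = g t) -> P h.

Definition tsimplex (n : nat) : set 'rV[R]_n.+1 :=
  [set x | (forall i, 0 <= x ord0 i) /\ \sum_(i < n.+1) x ord0 i = 1].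
Arguments tsimplex n : clear implicits.

Definition DeltaGenerated (T : topologicalType) : Prop :=
  forall A : set T,
    (forall (n : nat) (f : 'rV[R]_n.+1 -> T), {within (tsimplex n), continuous f} ->
       exists B : set 'rV[R]_n.+1, open B /\ (f @^-1` A) `&` tsimplex n = B `&` tsimplex n) ->
    open A.

Definition cpath (T : topologicalType) (g : R -> T) : Prop :=
  {within `[0, 1], continuous g}.

Definition mu (l : R) (t : R) : R := t / l.

Definition Mset (l l' : R) (phi : R -> R) : Prop :=
  {within `[0, l], continuous phi} /\
  (forall t, 0 <= t <= l -> 0 <= phi t <= l') /\
  (forall s t, 0 <= s -> s <= t -> t <= l -> phi s <= phi t) /\
  (forall u, 0 <= u <= l' -> exists2 t, 0 <= t <= l & phi t = u).

Definition Iset (l : R) (phi : R -> R) : Prop :=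
  {within `[0, 1], continuous phi} /\
  (forall t, 0 <= t <= 1 -> 0 <= phi t <= l) /\
  (forall s t, 0 <= s -> s <= t -> t <= 1 -> phi s <= phi t).

Definition moore (T : Type) (l : R) (g1 g2 : R -> T) : R -> T :=
  fun t => if t <= l then g1 t else g2 (t - l).

Fixpoint mcat (T : Type) (p : R * (R -> T)) (s : seq (R * (R -> T))) : R -> T :=
  match s with
  | [::] => p.2
  | q :: s' => moore p.1 p.2 (mcat q s')
  end.

Definition ncomp (T : Type) (g1 g2 : R -> T) : R -> T :=
  moore (1 / 2) (g1 \o mu (1 / 2)) (g2 \o mu (1 / 2)).

Definition is_mdspace (T : topologicalType) (X0 : set T) (P : set (R -> T)) : Prop :=
  [/\ saturated P,
      (forall g, P g -> cpath g),
      (forall g, P g -> X0 (g 0) /\ X0 (g 1)),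
      (forall g phi, P g -> Mset 1 1 phi -> P (g \o phi)) &
      (forall g1 g2, P g1 -> P g2 -> g1 1 = g2 0 -> P (ncomp g1 g2))].

Definition is_dspace (T : topologicalType) (d : set (R -> T)) : Prop :=
  [/\ saturated d,
      (forall g, d g -> cpath g),
      (forall x : T, d (fun _ => x)),
      (forall g1 g2, d g1 -> d g2 -> g1 1 = g2 0 -> d (ncomp g1 g2)) &
      (forall g phi, d g -> Iset 1 phi -> d (g \o phi))].

Definition mdmap (T T' : topologicalType) (X0 : set T) (P : set (R -> T))
    (Y0 : set T') (Q : set (R -> T')) (f : T -> T') : Prop :=
  [/\ continuous f, f @` X0 `<=` Y0 & forall g, P g -> Q (f \o g)].

Definition dmap (T T' : topologicalType) (d : set (R -> T)) (d' : set (R -> T'))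
    (f : T -> T') : Prop :=
  continuous f /\ forall g, d g -> d' (f \o g).

Definition piece (T : Type) (g : R -> T) (phi : R -> R) (l : R) : R -> T :=
  g \o phi \o mu l.

Definition dX (T : topologicalType) (P : set (R -> T)) : set (R -> T) :=
  [set g | cpath g /\
    ((exists x : T, forall t, 0 <= t <= 1 -> g t = x) \/
     exists (m : nat) (gam : nat -> R -> T) (phi : nat -> R -> R) (l : nat -> R),
       [/\ (forall i, (i <= m)%N -> P (gam i) /\ Iset 1 (phi i)),
           (forall i, (i <= m)%N -> 0 < l i),
           (\sum_(i < m.+1) l i = 1),
           (forall i, (i < m)%N -> gam i (phi i 1) = gam i.+1 (phi i.+1 0)) &
           (forall t, 0 <= t <= 1 ->
             g t = mcat (l 0%N, piece (gam 0%N) (phi 0%N) (l 0%N))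
                        [seq (l i, piece (gam i) (phi i) (l i)) | i <- iota 1 m] t)])].

End Defs.

(* Main.v *)
Require Import Defs.
From HB Require Import structures.
From mathcomp Require Import all_boot all_order all_algebra.
From mathcomp Require Import all_classical all_reals all_analysis.
From mathcomp Require Import lra.
Import Order.TTheory GRing.Theory Num.Theory.
Import numFieldNormedType.Exports.
Local Open Scope classical_set_scope.
Local Open Scope ring_scope.

Lemma within_comp {X Y Z : topologicalType} (A : set X) (B : set Y) (f : X -> Y) (g : Y -> Z) :
 {within A, continuous f} -> {within B, continuous g} -> (forall x, A x -> B (f x)) ->
 {within A, continuous (g \o f)}.
Proof.
move=> /subspace_continuousP cf /subspace_continuousP cg fAB.
apply/subspace_continuousP.
move=> x Ax; apply: (@cvg_comp _ _ _ f g _ (within B (nbhs (f x)))).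
2: exact: (cg _ (fAB _ Ax)).
move=> W /=.
rewrite {1}/within /= => nW.
have := cf x Ax _ nW.
rewrite !nbhs_simpl /=. rewrite /within /=.
apply: filterS => t H At; exact: (H At (fAB _ At)).
Qed.
Arguments within_comp {X Y Z A} B {f g}.

Lemma c1 (R : realType) (a b : R) : continuous ((fun t => (t - a) / b) : R -> R).
Proof.
move=> x; apply: (@continuousM _ _ (fun t => t - a) (fun=> b^-1)); last exact: cst_continuous.
apply: (@continuousB _ _ _ id (fun=> a)); [exact: cvg_id| exact: cst_continuous].
Qed.
Lemma c2 (R : realType) (a b : R) : continuous ((fun t => a + t * b) : R -> R).
Proof.
have -> : (fun t : R => a + t * b) = (fun y => (y - (- a)) / 1) \o (fun t => t * b).
  by apply: funext => t; rewrite /= divr1 opprK addrC.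
move=> x; apply: continuous_comp; [exact: mulrr_continuous | exact: c1].
Qed.
Lemma i01 (R : realType) (a b x : R) : ([set` `[a, b]] : set R) x = (a <= x <= b).
Proof. by rewrite /= in_itv. Qed.
Lemma mm (R : realType) (a b c : R) : a < b -> b < c -> Num.min a c <= b <= Num.max a c.
Proof. move=> *. rewrite ge_min le_max. apply/andP; split; apply/orP; [left|right]; lra. Qed.

Section S.
Variable R : realType.
Variable T : topologicalType.
Variable P : set (R -> T).

Definition trip := ((R * (R -> T)) * (R -> R))%type.
Definition pieceOf (x : trip) : R * (R -> T) := (x.1.1, piece x.1.2 x.2 x.1.1).
Definition startv (x : trip) := x.1.2 (x.2 0).
Definition endv (x : trip) := x.1.2 (x.2 1).
Fixpoint good (s : seq trip) : Prop :=
  match s with [::] => True | y :: s' => (0 < y.1.1 /\ P y.1.2 /\ Iset 1 y.2) /\ good s' end.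
Fixpoint chain (x : trip) (s : seq trip) : Prop :=
  match s with [::] => True | y :: s' => endv x = startv y /\ chain y s' end.
Fixpoint slen (s : seq trip) : R :=
  match s with [::] => 0 | y :: s' => y.1.1 + slen s' end.

Lemma slen_ge0 s : good s -> 0 <= slen s.
Proof.
elim: s => [|y s IH] //= [[y0 _] /IH]; lra.
Qed.

Lemma slen_gt0 x s : good (x :: s) -> 0 < slen (x :: s).
Proof. move=> /= [[x0 _] /slen_ge0]; lra. Qed.

Lemma mcat_le (p : R * (R -> T)) s t : t <= p.1 -> mcat p s t = p.2 t.
Proof. by case: s => [|q s] //= H; rewrite /moore H. Qed.

Lemma mcat_cat x s1 y s2 t : good (x :: s1) ->
  mcat (pieceOf x) (map pieceOf (s1 ++ y :: s2)) t =
  if t <= slen (x :: s1) then mcat (pieceOf x) (map pieceOf s1) t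
  else mcat (pieceOf y) (map pieceOf s2) (t - slen (x :: s1)).
Proof.
elim: s1 x t => [|z s1 IH] x t /=.
  by rewrite addr0 /moore.
move=> [[x0 _] gz].
rewrite /moore IH //=.
have := @slen_gt0 z s1 gz => /= hz.
case: (leP t x.1.1) => h1; case: (leP t (x.1.1 + (z.1.1 + slen s1))) => h2 //.
- exfalso; lra.
- case: (leP (t - x.1.1) (z.1.1 + slen s1)) => h3 //; exfalso; lra.
- case: (leP (t - x.1.1) (z.1.1 + slen s1)) => h3 //; first (exfalso; lra).
  by congr mcat; lra.
Qed.

Lemma mcat_end x s : good (x :: s) ->
  mcat (pieceOf x) (map pieceOf s) (slen (x :: s)) = endv (last x s).
Proof.
elim: s x => [|y s IH] x /=.
  move=> [[x0 _] _]; rewrite addr0 /piece /comp /mu divff //; lra.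
move=> [[x0 _] gy]; rewrite /moore.
have := @slen_gt0 y s gy => /= hy.
case: (leP (x.1.1 + (y.1.1 + slen s)) x.1.1) => h; first (exfalso; lra).
rewrite -IH //=; congr mcat; lra.
Qed.

Lemma mcat_start x s : 0 < x.1.1 -> mcat (pieceOf x) (map pieceOf s) 0 = startv x.
Proof. by move=> h; rewrite mcat_le /= ?ltW // /piece /comp /mu mul0r. Qed.

Lemma good_cat s1 s2 : good s1 -> good s2 -> good (s1 ++ s2).
Proof. by elim: s1 => [|y s IH] //= [? ?] ?; split => //; apply: IH. Qed.

Lemma chain_cat x s1 y s2 : chain x s1 -> endv (last x s1) = startv y -> chain y s2 ->
  chain x (s1 ++ y :: s2).
Proof. by elim: s1 x => [|z s IH] x //= [? ?] ? ?; split => //; apply: IH. Qed.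

Lemma slen_cat s1 s2 : slen (s1 ++ s2) = slen s1 + slen s2.
Proof. by elim: s1 => [|y s IH] /=; [rewrite add0r | rewrite IH addrA]. Qed.


Definition LF u v (h : R -> T) := exists x s, [/\ good (x :: s), chain x s,
  slen (x :: s) = v - u &
  forall t, u <= t <= v -> h t = mcat (pieceOf x) (map pieceOf s) (t - u)].

Inductive Comp : R -> R -> (R -> T) -> Prop :=
| CPiece u v gam psi h : u < v -> P gam -> Iset 1 psi ->
    (forall t, u <= t <= v -> h t = gam (psi ((t - u) / (v - u)))) -> Comp u v h
| CCat u w v h : Comp u w h -> Comp w v h -> Comp u v h.
Arguments CPiece {u v gam psi h}.
Arguments CCat {u w v h}.

Lemma Comp_lt u v h : Comp u v h -> u < v.
Proof. by elim=> // u0 w v0 h0 _ H1 _ H2; apply: lt_trans H1 H2. Qed.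
Arguments Comp_lt {u v h}.

Lemma Comp_ext u v h : Comp u v h -> forall h', (forall t, u <= t <= v -> h' t = h t) -> Comp u v h'.
Proof.
elim=> [u0 v0 gam psi h0 lt Pg Ip Hh h' E|u0 w v0 h0 C1 IH1 C2 IH2 h' E].
  by apply: (CPiece lt Pg Ip) => t ht; rewrite E // Hh.
have := Comp_lt C1; have := Comp_lt C2 => l2 l1.
apply: CCat; [apply: IH1 | apply: IH2] => t /andP [t1 t2]; apply: E; apply/andP; split; lra.
Qed.

Lemma Comp_LF u v h : Comp u v h -> LF u v h.
Proof.
elim=> [u0 v0 gam psi h0 lt Pg Ip Hh|u0 w v0 h0 C1 [x1 [s1 [g1 c1 l1 e1]]] C2 [x2 [s2 [g2 c2 l2 e2]]]].
  exists (v0 - u0, gam, psi), [::]; split => //=.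
  - by split => //; split => //; lra.
  - by rewrite addr0.
have := Comp_lt C1; have := Comp_lt C2 => lt2 lt1.
exists x1, (s1 ++ x2 :: s2); split.
- exact: (@good_cat (x1 :: s1) (x2 :: s2)).
- apply: chain_cat => //.
  rewrite -mcat_end // l1 -e1; last by apply/andP; split; lra.
  rewrite e2; last by apply/andP; split; lra.
  rewrite subrr mcat_start //; by case: g2 => [[]].
- by rewrite (@slen_cat (x1 :: s1) (x2 :: s2)) l1 l2; lra.
- move=> t /andP [t1 t2]; rewrite mcat_cat // l1.
  case: (leP (t - u0) (w - u0)) => h1.
    by rewrite e1 //; apply/andP; split; lra.
  rewrite e2; last by apply/andP; split; lra.
  by congr mcat; lra.
Qed.

Lemma LF_Comp_aux s : forall x u v h, good (x :: s) -> chain x s -> slen (x :: s) = v - u ->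
  (forall t, u <= t <= v -> h t = mcat (pieceOf x) (map pieceOf s) (t - u)) -> Comp u v h.
Proof.
elim: s => [|y s IH] x u v h /=.
  move=> [[x0 [Px Ix]] _] _ l e.
  apply: (CPiece (gam := x.1.2) (psi := x.2)) => //; first lra.
  by move=> t ht; rewrite e // /piece /comp /mu; congr (x.1.2 (x.2 (_ / _))); lra.
move=> [[x0 [Px Ix]] gy] [exy cy] l e.
have := @slen_gt0 y s gy => /= hy.
apply: (@CCat u (u + x.1.1) v).
  apply: (CPiece (gam := x.1.2) (psi := x.2)) => //; first lra.
  move=> t /andP [t1 t2]; rewrite e; last by apply/andP; split; lra.
  rewrite /moore ifT; last lra.
  by rewrite /piece /comp /mu; congr (x.1.2 (x.2 (_ / _))); lra.
apply: (IH y) => //=; first lra.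
move=> t /andP [t1 t2]; rewrite e; last by apply/andP; split; lra.
rewrite /= /moore; case: (leP (t - u) x.1.1) => h1.
  have -> : t - (u + x.1.1) = 0 by lra.
  rewrite mcat_start; last by case: gy => [[]].
  have -> : t - u = x.1.1 by lra.
  by rewrite /piece /comp /mu divff ?exy //; lra.
by congr mcat; lra.
Qed.

Lemma LF_Comp u v h : LF u v h -> Comp u v h.
Proof. by move=> [x [s [g c l e]]]; apply: (@LF_Comp_aux s x u v h g c l e). Qed.


Lemma div01 (a b c : R) : a <= b <= c -> a < c -> 0 <= (b - a) / (c - a) <= 1.
Proof.
move=> /andP [h1 h2] h3; apply/andP; split.
  apply: divr_ge0; lra.
rewrite ler_pdivrMr; lra.
Qed.
Arguments div01 {a b c}.

Lemma div_mono (a c y1 y2 : R) : a < c -> y1 <= y2 -> (y1 - a) / (c - a) <= (y2 - a) / (c - a).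
Proof.
move=> h1 h2; rewrite ler_pM2r; first lra.
rewrite invr_gt0; lra.
Qed.

Lemma Comp_reparam u v h : Comp u v h -> forall u' v' phi, u' < v' ->
  {within `[u', v'], continuous phi} ->
  (forall t, u' <= t <= v' -> u <= phi t <= v) ->
  (forall s t, u' <= s -> s <= t -> t <= v' -> phi s <= phi t) ->
  Comp u' v' (h \o phi).
Proof.
elim=> [u0 v0 gam psi h0 lt Pg [Ic [Ir Im]] Hh|u0 w v0 h0 C1 IH1 C2 IH2] u' v' phi lt' cphi rphi mphi.
  pose aff := (fun s : R => u' + s * (v' - u')).
  have aff_in : forall s, 0 <= s <= 1 -> u' <= aff s <= v'.
    move=> s /andP [s0 s1]; rewrite /aff; apply/andP; split; nra.
  pose psi' := psi \o (((fun y => (y - u0) / (v0 - u0)) \o phi) \o aff).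
  apply: (CPiece (gam := gam) (psi := psi')) => //.
    split; [|split].
    - apply: (within_comp (Y := R) [set` `[0, 1]]) => //; last first.
        move=> s; rewrite !i01 => hs; apply: div01 => //; apply: rphi; exact: aff_in.
      apply: (within_comp (Y := R) [set` `[u', v']]); last first.
      + by move=> s; rewrite !i01 => hs; apply: aff_in.
      + apply: (within_comp (Y := R) setT) => //.
        by apply: continuous_subspaceT; apply: c1.
      + by apply: continuous_subspaceT; apply: c2.
    - move=> s hs; apply: Ir; apply: div01 => //; apply: rphi; exact: aff_in.
    - move=> s t s0 st t1.
      have hs : 0 <= s <= 1 by apply/andP; split; lra.
      have ht : 0 <= t <= 1 by apply/andP; split; lra.
      have /andP [as1 as2] := aff_in s hs.
      have /andP [at1 at2] := aff_in t ht.
      have afst : aff s <= aff t by rewrite /aff; nra.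
      apply: Im => /=.
      + by case/andP: (div01 (rphi _ (aff_in s hs)) lt).
      + by apply: div_mono => //; apply: mphi.
      + by case/andP: (div01 (rphi _ (aff_in t ht)) lt).
  move=> t /andP [t1 t2] /=.
  rewrite Hh; last by apply: rphi; apply/andP; split.
  congr (gam (psi _)); rewrite /= /aff divfK; last by rewrite subr_eq0; apply/eqP; lra.
  by congr (_ / _); congr (phi _ - _); lra.
have lt1 := Comp_lt C1; have lt2 := Comp_lt C2.
have hu' : u' <= u' <= v' by apply/andP; split; lra.
have hv' : u' <= v' <= v' by apply/andP; split; lra.
case: (leP (phi v') w) => hv.
  apply: IH1 => // t ht; case/andP: (ht) => t1 t2.
  have /andP [p1 p2] := rphi t ht; apply/andP; split => //.
  by apply: le_trans hv; apply: mphi.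
case: (leP w (phi u')) => hu.
  apply: IH2 => // t ht; case/andP: (ht) => t1 t2.
  have /andP [p1 p2] := rphi t ht; apply/andP; split => //.
  by apply: le_trans hu _; apply: mphi.
have [c cI pc] : exists2 c, c \in `[u', v'] & phi c = w.
  apply: IVT; [lra | exact: cphi | ].
  rewrite ge_min le_max; apply/andP; split; apply/orP; [left|right]; lra.
move: cI; rewrite in_itv /= => /andP [c1 c2].
have uc : u' < c by case: (ltgtP u' c) => // E; [lra | rewrite -E in pc; lra].
have cv : c < v' by case: (ltgtP c v') => // E; [lra | rewrite E in pc; lra].
apply: (@CCat u' c v').
  apply: IH1 => //.
  - apply: continuous_subspaceW cphi => x /=; rewrite !in_itv /= => /andP [x1 x2].
    by apply/andP; split; lra.
  - move=> t /andP [t1 t2]; have ht : u' <= t <= v' by apply/andP; split; lra.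
    have /andP [p1 p2] := rphi t ht; apply/andP; split => //.
    by rewrite -pc; apply: mphi.
  - by move=> s t s1 st t1; apply: mphi => //; lra.
apply: IH2 => //.
- apply: continuous_subspaceW cphi => x /=; rewrite !in_itv /= => /andP [x1 x2].
  by apply/andP; split; lra.
- move=> t /andP [t1 t2]; have ht : u' <= t <= v' by apply/andP; split; lra.
  have /andP [p1 p2] := rphi t ht; apply/andP; split => //.
  by rewrite -pc; apply: mphi.
- by move=> s t s1 st t1; apply: mphi => //; lra.
Qed.


Lemma Comp_cpath (HP : forall g, P g -> cpath g) u v h : Comp u v h -> {within `[u, v], continuous h}.
Proof.
elim=> [u0 v0 gam psi h0 lt Pg [Ic [Ir Im]] Hh|u0 w v0 h0 C1 IH1 C2 IH2].
  apply: (subspace_eq_continuous (f := gam \o (psi \o (fun t => (t - u0) / (v0 - u0))))).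
    by move=> t; rewrite inE i01 => ht; rewrite /from_subspace /= Hh.
  apply: (within_comp (Y := R) [set` `[0, 1]]).
  - apply: (within_comp (Y := R) [set` `[0, 1]]) => //.
      by apply: continuous_subspaceT; apply: c1.
    by move=> t; rewrite !i01 => ht; apply: div01.
  - exact: HP.
  - by move=> t; rewrite !i01 => ht; apply: Ir; apply: div01.
have lt1 := Comp_lt C1; have lt2 := Comp_lt C2.
have -> : [set` `[u0, v0]] = [set` `[u0, w]] `|` [set` `[w, v0]].
  rewrite eqEsubset; split => x /=; rewrite !in_itv /=.
    move=> /andP [x1 x2]; case: (leP x w) => xw; [left|right]; apply/andP; split; lra.
  by case=> /andP [x1 x2]; apply/andP; split; lra.
by apply: withinU_continuous => //; apply: itv_closed.
Qed.

Lemma good_iota (F : nat -> trip) a n :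
  (forall i, (a <= i)%N -> (i < a + n)%N -> 0 < (F i).1.1 /\ P (F i).1.2 /\ Iset 1 (F i).2) ->
  good (map F (iota a n)).
Proof.
elim: n a => [|n IH] a H //=; split.
  by apply: H; rewrite ?leqnn ?addnS ?ltnS ?leq_addr.
apply: IH => i h1 h2; apply: H; first by apply: ltnW.
by rewrite addnS -addSn.
Qed.

Lemma chain_iota (F : nat -> trip) a n :
  (forall i, (a <= i)%N -> (i < a + n)%N -> endv (F i) = startv (F i.+1)) ->
  chain (F a) (map F (iota a.+1 n)).
Proof.
elim: n a => [|n IH] a H //=; split.
  by apply: H; rewrite ?leqnn ?addnS ?ltnS ?leq_addr.
apply: IH => i h1 h2; apply: H; first by apply: ltnW.
by rewrite addnS -addSn.
Qed.

Lemma slen_iota (F : nat -> trip) a n :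
  slen (map F (iota a n)) = \sum_(i <- iota a n) (F i).1.1.
Proof. elim: n a => [|n IH] a /=; first by rewrite big_nil. by rewrite big_cons IH. Qed.

Lemma good_nth d s i : good s -> (i < size s)%N ->
  0 < (nth d s i).1.1 /\ P (nth d s i).1.2 /\ Iset 1 (nth d s i).2.
Proof. by elim: s i => [|y s IH] [|i] //= [H1 H2] Hi; [exact: H1 | exact: IH]. Qed.

Lemma slen_nth d s : slen s = \sum_(i < size s) (nth d s i).1.1.
Proof. by elim: s => [|y s IH] /=; [rewrite big_ord0 | rewrite big_ord_recl IH]. Qed.

Lemma chain_nth x s i : chain x s -> (i < size s)%N ->
  endv (nth x (x :: s) i) = startv (nth x (x :: s) i.+1).
Proof.
elim: s x i => [|y s IH] x [|i] //= [H1 H2] Hi; first exact: H1.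
have h1 : (i < size (y :: s))%N by rewrite /= ltnS ltnW.
have h2 : (i.+1 < size (y :: s))%N by exact: Hi.
rewrite (set_nth_default y x h1) -[nth x s i]/(nth x (y :: s) i.+1) (set_nth_default y x h2); exact: IH.
Qed.

Lemma map_iota_nth {A : Type} d (G : trip -> A) (f : nat -> A) s a :
  (forall i, (i < size s)%N -> f (a + i)%N = G (nth d s i)) -> map f (iota a (size s)) = map G s.
Proof.
elim: s a => [|y s IH] a H //=.
rewrite -[a in f a]addn0 H //; congr (_ :: _).
apply: IH => i hi; rewrite addSn -addnS; exact: (H i.+1).
Qed.

Lemma dX_inv g : dX P g -> cpath g /\ ((exists x, forall t, 0 <= t <= 1 -> g t = x) \/ Comp 0 1 g).
Proof.
case=> cg [Hc | [m [gam [phi [l [H1 H2 H3 H4 H5]]]]]]; split => //; [by left | right].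
apply: LF_Comp.
pose F := fun i => (l i, gam i, phi i) : trip.
exists (F 0%N), (map F (iota 1 m)); split.
- apply: (@good_iota F 0 m.+1) => i _ hi /=.
  by have [? ?] := H1 i hi; split => //; apply: H2.
- by apply: (@chain_iota F 0 m) => i _ hi; apply: H4.
- rewrite subr0 -H3 -[F 0%N :: _]/(map F (iota 0 m.+1)) slen_iota.
  by rewrite -(big_mkord xpredT l) /index_iota subn0.
- move=> t ht; rewrite subr0 H5 // -map_comp.
  done.
Qed.

Lemma Comp_dX (HP : forall g, P g -> cpath g) g : Comp 0 1 g -> dX P g.
Proof.
move=> C; split; first exact: (Comp_cpath HP _ _ _ C).
right; case: (Comp_LF _ _ _ C) => x [s [gd ch sl eq]].
pose F i := nth x (x :: s) i.
exists (size s), (fun i => (F i).1.2), (fun i => (F i).2), (fun i => (F i).1.1); split.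
- by move=> i hi; have [_ ?] := good_nth x _ _ gd hi.
- by move=> i hi; have [? _] := good_nth x _ _ gd hi.
- by move: sl; rewrite subr0 (slen_nth x) => <-.
- by move=> i hi; apply: chain_nth.
- move=> t ht; rewrite eq // subr0; congr mcat.
  symmetry; apply: (map_iota_nth x) => i hi.
  by rewrite add1n.
Qed.


Lemma const_dX g x : (forall t, 0 <= t <= 1 -> g t = x) -> dX P g.
Proof.
move=> E; split; last by left; exists x.
apply: (subspace_eq_continuous (f := fun=> x)).
  by move=> t; rewrite inE i01 => ht; rewrite /from_subspace E.
by apply: continuous_subspaceT; exact: cst_continuous.
Qed.

Lemma Comp_reparam01 g u' v' (phi : R -> R) : Comp 0 1 g -> u' < v' -> continuous phi ->
  (forall t, u' <= t <= v' -> 0 <= phi t <= 1) ->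
  (forall s t, u' <= s -> s <= t -> t <= v' -> phi s <= phi t) -> Comp u' v' (g \o phi).
Proof.
move=> C lt cphi r m; apply: (Comp_reparam _ _ _ C) => //.
exact: continuous_subspaceT.
Qed.
Arguments Comp_reparam01 {g} u' v' phi.

Lemma half_in (t : R) : 0 <= t <= 1 / 2 -> 0 <= t / (1 / 2) <= 1.
Proof. rewrite div1r invrK => /andP [t1 t2]; apply/andP; split; lra. Qed.

Lemma half_in2 (t : R) : 1 / 2 <= t <= 1 -> 0 <= (t - 1 / 2) / (1 / 2) <= 1.
Proof. rewrite div1r invrK => /andP [t1 t2]; apply/andP; split; lra. Qed.

Lemma left_comp g1 g2 : Comp 0 1 g1 -> Comp 0 (1 / 2) (ncomp g1 g2).
Proof.
move=> C1.
have := Comp_reparam01 0 (1 / 2) (fun t => (t - 0) / (1 / 2)) C1 _ (@c1 _ 0 (1 / 2)).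
move=> /(_ ltac:(lra)) H; apply: Comp_ext; first apply: H.
- by move=> t ht; rewrite subr0; apply: half_in.
- by move=> s t s0 st t1; rewrite !subr0 ler_pM2r // invr_gt0; lra.
move=> t ht; rewrite /ncomp /moore ifT; last by case/andP: ht.
by rewrite /comp /mu subr0.
Qed.

Lemma left_part g1 g2 : cpath g1 ->
  ((exists x, forall t, 0 <= t <= 1 -> g1 t = x) \/ Comp 0 1 g1) ->
  Comp 0 1 g2 -> g1 1 = g2 0 -> Comp 0 (1 / 2) (ncomp g1 g2).
Proof.
move=> _ [[x Hx]|C1] C2 E.
  have := Comp_reparam01 0 (1 / 2) (fun=> 0) C2 _ (@cst_continuous R R 0).
  move=> /(_ ltac:(lra)) H; apply: Comp_ext; first apply: H.
  - by move=> t _; apply/andP; split; lra.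
  - by move=> *; lra.
  move=> t ht; rewrite /ncomp /moore ifT; last by case/andP: ht.
  rewrite /comp Hx; last by rewrite /mu; apply: half_in.
  by rewrite -E Hx //; apply/andP; split; lra.
have := Comp_reparam01 0 (1 / 2) (fun t => (t - 0) / (1 / 2)) C1 _ (@c1 _ 0 (1 / 2)).
move=> /(_ ltac:(lra)) H; apply: Comp_ext; first apply: H.
- by move=> t ht; rewrite subr0; apply: half_in.
- by move=> s t s0 st t1; rewrite !subr0 ler_pM2r // invr_gt0; lra.
move=> t ht; rewrite /ncomp /moore ifT; last by case/andP: ht.
by rewrite /comp /mu subr0.
Qed.

Lemma right_part g1 g2 : Comp 0 1 g1 ->
  ((exists x, forall t, 0 <= t <= 1 -> g2 t = x) \/ Comp 0 1 g2) ->
  g1 1 = g2 0 -> Comp (1 / 2) 1 (ncomp g1 g2).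
Proof.
move=> C1 [[x Hx]|C2] E.
  have := Comp_reparam01 (1 / 2) 1 (fun=> 1) C1 _ (@cst_continuous R R 1).
  move=> /(_ ltac:(lra)) H; apply: Comp_ext; first apply: H.
  - by move=> t _; apply/andP; split; lra.
  - by move=> *; lra.
  move=> t /andP [t1 t2]; rewrite /ncomp /moore /comp /mu.
  case: (leP t (1 / 2)) => ht.
    have -> : t = 1 / 2 by lra.
    by rewrite divff //; lra.
  rewrite E (Hx 0) ?Hx //; first by apply/andP; split; lra.
  by apply/andP; split; lra.
have := Comp_reparam01 (1 / 2) 1 (fun t => (t - 1 / 2) / (1 / 2)) C2 _ (@c1 _ (1 / 2) (1 / 2)).
move=> /(_ ltac:(lra)) H; apply: Comp_ext; first apply: H.
- by move=> t ht; apply: half_in2.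
- by move=> s t s0 st t1; rewrite ler_pM2r ?invr_gt0; lra.
move=> t /andP [t1 t2]; rewrite /ncomp /moore /comp /mu.
case: (leP t (1 / 2)) => ht //.
have -> : t = 1 / 2 by lra.
by rewrite divff ?subrr ?mul0r //; lra.
Qed.

Lemma dX_ncomp (HP : forall g, P g -> cpath g) g1 g2 : dX P g1 -> dX P g2 -> g1 1 = g2 0 ->
  dX P (ncomp g1 g2).
Proof.
move=> /dX_inv [c1' D1] /dX_inv [c2' D2] E.
case: D2 => [[y Hy]|C2].
  case: D1 => [[x Hx]|C1].
    apply: (const_dX _ x) => t /andP [t1 t2]; rewrite /ncomp /moore /comp /mu.
    case: (leP t (1 / 2)) => ht; first by rewrite Hx //; apply: half_in; apply/andP; split.
    rewrite Hy; last by apply: half_in2; apply/andP; split; lra.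
    by rewrite -(Hy 0) ?E -?(Hx 1) //; apply/andP; split; lra.
  apply: Comp_dX => //; apply: (@CCat 0 (1 / 2) 1).
    exact: left_comp.
  by apply: right_part => //; left; exists y.
apply: Comp_dX => //; apply: (@CCat 0 (1 / 2) 1).
  exact: left_part.
case: D1 => [[x Hx]|C1]; last by apply: right_part => //; right.
have := Comp_reparam01 (1 / 2) 1 (fun t => (t - 1 / 2) / (1 / 2)) C2 _ (@c1 _ (1 / 2) (1 / 2)).
move=> /(_ ltac:(lra)) H; apply: Comp_ext; first apply: H.
- by move=> t ht; apply: half_in2.
- by move=> s t s0 st t1; rewrite ler_pM2r ?invr_gt0; lra.
move=> t /andP [t1 t2]; rewrite /ncomp /moore /comp /mu.
case: (leP t (1 / 2)) => ht //.
have -> : t = 1 / 2 by lra.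
rewrite divff ?subrr ?mul0r -?E //; lra.
Qed.

Lemma dX_Iset (HP : forall g, P g -> cpath g) g phi : dX P g -> Iset 1 phi -> dX P (g \o phi).
Proof.
move=> /dX_inv [cg [[x Hx]|C]] [Ic [Ir Im]].
  by apply: (const_dX _ x) => t ht; rewrite /comp Hx //; apply: Ir.
apply: Comp_dX => //; apply: (Comp_reparam _ _ _ C) => //; lra.
Qed.

Lemma dX_sat g h : dX P g -> (forall t, 0 <= t <= 1 -> h t = g t) -> dX P h.
Proof.
move=> [cg D] E; split.
  by apply: (subspace_eq_continuous (f := g)) => // t; rewrite inE i01 => ht; rewrite /from_subspace E.
case: D => [[x Hx]|[m [gam [phi [l [H1 H2 H3 H4 H5]]]]]].
  by left; exists x => t ht; rewrite E // Hx.
right; exists m, gam, phi, l; split => // t ht; rewrite E //; exact: H5.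
Qed.

End S.

Section M.
Variable R : realType.
Variables T T' : topologicalType.
Variable P : set (R -> T).
Variable Q : set (R -> T').
Variable f : T -> T'.
Hypothesis HPQ : forall g, P g -> Q (f \o g).

Lemma Comp_map u v h : @Comp R T P u v h -> @Comp R T' Q u v (f \o h).
Proof.
elim=> [u0 v0 gam psi h0 lt Pg Ip Hh|u0 w v0 h0 C1 IH1 C2 IH2].
  apply: (@CPiece R T' Q u0 v0 (f \o gam) psi) => //; first exact: HPQ.
  by move=> t ht; rewrite /comp Hh.
exact: (@CCat R T' Q _ _ _ _ IH1 IH2).
Qed.
End M.

Theorem proposition3p4 (R : realType) :
  (forall (T : topologicalType) (X0 : set T) (P : set (R -> T)),
      DeltaGenerated R T -> is_mdspace X0 P -> is_dspace (dX P)) /\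
  (forall (T T' : topologicalType) (X0 : set T) (P : set (R -> T))
          (Y0 : set T') (Q : set (R -> T')) (f : T -> T'),
      DeltaGenerated R T -> DeltaGenerated R T' ->
      is_mdspace X0 P -> is_mdspace Y0 Q ->
      mdmap X0 P Y0 Q f -> dmap (dX P) (dX Q) f).
Proof.
split.
  move=> T X0 P _ [Psat Pc Pend PM Pn]; split.
  - by move=> g h Hg E; apply: (dX_sat _ _ _ _ _ Hg E).
  - by move=> g [].
  - by move=> x; apply: (const_dX _ _ _ _ x).
  - by move=> g1 g2 H1 H2 E; apply: (dX_ncomp _ _ _ Pc _ _ H1 H2 E).
  - by move=> g phi Hg Ip; apply: (dX_Iset _ _ _ Pc _ _ Hg Ip).
move=> T T' X0 P Y0 Q f _ _ [_ Pc _ _ _] [_ Qc _ _ _] [fc _ fP]; split => // g Hg.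
have [cg [[x Hx]|C]] := dX_inv _ _ _ _ Hg.
  by apply: (const_dX _ _ _ _ (f x)) => t ht; rewrite /comp Hx.
apply: (Comp_dX _ _ _ Qc); exact: (Comp_map _ _ _ _ _ _ fP _ _ _ C).
Qed.
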